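(* Consider searching on a line with turn cost $t$ and lower bound $\lambda>0$, and suppose $s:=\frac{t}{2\lambda}\ge1$. Then the periodic strategy with distances $$x_i=\Big((1+s)\big(1+s^{-1}\big)^i-s\Big)\lambda,\qquad i\ge1,$$ is optimal, and its competitive ratio is $$\frac{2x_1+t+\lambda}{\lambda}=\frac{2\,(s+2)\,(s+\tfrac12)}{s}.$$
   Context: Searching on a line with turn cost. Fix $\lambda>0$, $t\ge 0$. A search strategy is a sequence $\mathcal S(i)=(x_i,r_i)$, $i\ge1$, with $x_i>0$, $r_i\in\{\mathrm{left},\mathrm{right}\}$ and $\sup\{x_i:r_i=\mathrm{left}\}=\sup\{x_i:r_i=\mathrm{right}\}=\infty$. At step $i$ the searcher walks distance $x_i$ from the origin along ray $r_i$ and, if the target is not found, walks back to the origin, paying an additional turn cost $t$; thus each unsuccessful step costs $2x_i+t$. The target is on one of the two rays at unknown distance $D\ge\lambda$ and is found at the first step $j$ with $r_j$ equal to its ray and $x_j\ge D$; the total cost is then $\sum_{i=1}^{j-1}(2x_i+t)+D$. The competitive ratio of $\mathcal S$ is the supremum over all target positions of total cost divided by $D$; a strategy is optimal if its competitive ratio is minimal among all search strategies. A periodic strategy with distances $x_i$ means $r_1\ne r_2$ and $r_{i+2}=r_i$ (the rays alternate). For a periodic strategy with increasing distances the competitive ratio equals $\max\Big\{\frac{2x_1+t+\lambda}{\lambda},\ \sup_{n\ge1}\frac{\sum_{i=1}^{n+1}(2x_i+t)+x_n}{x_n}\Big\}$. *)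

(* Defs.v *)
From Stdlib Require Import Reals Lra Lia.
Open Scope R_scope.

(* A search strategy: step i (i >= 1; index 0 is ignored) explores distance
   x i along ray r i (true = right, false = left). *)
Record strategy := mkStrategy { sx : nat -> R ; sr : nat -> bool }.

Fixpoint psum (f : nat -> R) (n : nat) : R :=
  match n with
  | O => 0
  | S k => psum f k + f (S k)
  end.

Definition valid_strategy (S : strategy) : Prop :=
  (forall i, (1 <= i)%nat -> 0 < sx S i) /\
  (forall (b : bool) (M : R), exists i, (1 <= i)%nat /\ sr S i = b /\ M < sx S i).

Definition found_at (S : strategy) (b : bool) (D : R) (j : nat) : Prop :=
  (1 <= j)%nat /\ sr S j = b /\ D <= sx S j /\
  forall i, (1 <= i)%nat -> (i < j)%nat -> ~ (sr S i = b /\ D <= sx S i).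

Definition total_cost (t : R) (S : strategy) (D : R) (j : nat) : R :=
  psum (fun i => 2 * sx S i + t) (j - 1) + D.

Definition ratio_set (lambda t : R) (S : strategy) (rho : R) : Prop :=
  exists (b : bool) (D : R) (j : nat),
    lambda <= D /\ found_at S b D j /\ rho = total_cost t S D j / D.

Definition comp_ratio (lambda t : R) (S : strategy) (c : R) : Prop :=
  is_lub (ratio_set lambda t S) c.

Definition periodic_rays (r : nat -> bool) : Prop :=
  r 1%nat <> r 2%nat /\ forall i, (1 <= i)%nat -> r (i + 2)%nat = r i.

Definition xopt (lambda t : R) (i : nat) : R :=
  let s := t / (2 * lambda) in
  ((1 + s) * (1 + / s) ^ i - s) * lambda.

(* Main.v *)
Require Import Defs.
From Stdlib Require Import Reals Lra Lia Psatz Classical Arith.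
Open Scope R_scope.

Lemma least_ex (P : nat -> Prop) : (exists n, P n) -> exists n, P n /\ forall m, (m < n)%nat -> ~ P m.
Proof.
  intros [n Hn].
  revert Hn. induction n as [n IH] using (well_founded_induction Wf_nat.lt_wf).
  intros Hn.
  destruct (classic (exists m, (m < n)%nat /\ P m)) as [[m [Hm Pm]]|Hno].
  - exact (IH m Hm Pm).
  - exists n. split; [exact Hn|]. intros m Hm Pm. apply Hno. eauto.
Qed.

Lemma argmax_ex (P : nat -> Prop) (f : nat -> R) :
  forall N a m, (a <= m < N)%nat -> P m ->
  exists j, (a <= j < N)%nat /\ P j /\ forall i, (a <= i < N)%nat -> P i -> f i <= f j.
Proof.
  induction N as [|N IH]; intros a m Hm Pm; [lia|].
  destruct (Nat.eq_dec m N) as [->|Hne].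
  - destruct (classic (exists i, (a <= i < N)%nat /\ P i)) as [[i [Hi Pi]]|Hno].
    + destruct (IH a i Hi Pi) as [j [Hj [Pj Hmax]]].
      destruct (Rle_dec (f N) (f j)) as [Hle|Hgt].
      * exists j. split; [lia|]. split; [exact Pj|]. intros i' Hi' Pi'.
        destruct (Nat.eq_dec i' N) as [->|Hne']; [exact Hle|]. apply Hmax; [lia|exact Pi'].
      * exists N. split; [lia|]. split; [exact Pm|]. intros i' Hi' Pi'.
        destruct (Nat.eq_dec i' N) as [->|Hne']; [lra|].
        specialize (Hmax i' ltac:(lia) Pi'). lra.
    + exists N. split; [lia|]. split; [exact Pm|]. intros i' Hi' Pi'.
      destruct (Nat.eq_dec i' N) as [->|Hne']; [lra|].
      exfalso. apply Hno. exists i'. split; [lia|exact Pi'].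
  - destruct (IH a m ltac:(lia) Pm) as [j [Hj [Pj Hmax]]].
    destruct (classic (P N /\ f j < f N)) as [[PN Hlt]|Hn].
    + exists N. split; [lia|]. split; [exact PN|]. intros i' Hi' Pi'.
      destruct (Nat.eq_dec i' N) as [->|Hne']; [lra|].
      specialize (Hmax i' ltac:(lia) Pi'). lra.
    + exists j. split; [lia|]. split; [exact Pj|]. intros i' Hi' Pi'.
      destruct (Nat.eq_dec i' N) as [->|Hne']; [|apply Hmax; [lia|exact Pi']].
      apply Rnot_lt_le. intro Hlt. apply Hn. split; assumption.
Qed.

Lemma psumS (f : nat -> R) n : psum f (S n) = psum f n + f (S n).
Proof. reflexivity. Qed.

Lemma psum_mono (f : nat -> R) : (forall i, (1 <= i)%nat -> 0 <= f i) ->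
  forall m n, (m <= n)%nat -> psum f m <= psum f n.
Proof.
  intros Hf m n Hmn. induction Hmn as [|n Hmn IH]; [lra|].
  rewrite psumS. specialize (Hf (S n) ltac:(lia)). lra.
Qed.

Lemma psum_step (f : nat -> R) : (forall i, (1 <= i)%nat -> 0 <= f i) ->
  forall e e', (e < e')%nat -> psum f e + f e' <= psum f e'.
Proof.
  intros Hf e e' H. destruct e' as [|e'']; [lia|]. rewrite psumS.
  pose proof (psum_mono f Hf e e'' ltac:(lia)). lra.
Qed.

Lemma nat_big (M : R) : exists N : nat, M < INR N.
Proof.
  destruct (archimed_cor1 (/ (Rabs M + 1))) as [N [HN HN0]].
  { apply Rinv_0_lt_compat. pose proof (Rabs_pos M). lra. }
  exists N. assert (0 < INR N) by (apply lt_0_INR; lia).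
  assert (Rabs M + 1 < INR N).
  { destruct (Rlt_le_dec (Rabs M + 1) (INR N)) as [h|h]; [exact h|].
    pose proof (Rinv_le_contravar (INR N) (Rabs M + 1) H h). lra. }
  pose proof (Rle_abs M). lra.
Qed.

Lemma cons_bound (lambda t : R) (S : strategy) (c : R) :
  0 < lambda -> 0 <= t -> valid_strategy S -> is_lub (ratio_set lambda t S) c ->
  forall n b v, lambda <= v ->
  (forall i, (1 <= i <= n)%nat -> sr S i = b -> sx S i <= v) ->
  psum (fun i => 2 * sx S i + t) n <= (c - 1) * v.
Proof.
  intros Hl Ht [Hpos Hinf] [Hub _] n b v Hv Hb.
  set (Tn := psum (fun i => 2 * sx S i + t) n).
  assert (Hf : forall i, (1 <= i)%nat -> 0 <= 2 * sx S i + t).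
  { intros i Hi. specialize (Hpos i Hi). lra. }
  assert (HD : forall D, v < D -> Tn + D <= c * D).
  { intros D HD.
    destruct (Hinf b D) as [i [Hi1 [Hib HiD]]].
    destruct (least_ex (fun j => (1 <= j)%nat /\ sr S j = b /\ D <= sx S j)) as [j [[Hj1 [Hjb HjD]] Hmin]].
    { exists i. split; [exact Hi1|split; [exact Hib|lra]]. }
    assert (Hfound : found_at S b D j).
    { unfold found_at. split; [exact Hj1|split; [exact Hjb|split; [exact HjD|]]].
      intros i' Hi'1 Hi'j [Hrb HxD]. apply (Hmin i' Hi'j). auto. }
    assert (Hin : ratio_set lambda t S (total_cost t S D j / D)).
    { exists b, D, j. split; [lra|split; [exact Hfound|reflexivity]]. }
    specialize (Hub _ Hin).
    assert (Hjn : (n < j)%nat).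
    { destruct (le_lt_dec j n) as [Hle|Hlt]; [|exact Hlt].
      specialize (Hb j ltac:(lia) Hjb). lra. }
    pose proof (psum_mono _ Hf n (j - 1) ltac:(lia)) as Hm.
    unfold total_cost in Hub.
    assert (HD0 : 0 < D) by lra.
    apply Rmult_le_compat_r with (r := D) in Hub; [|lra].
    unfold Rdiv in Hub. rewrite Rmult_assoc, Rinv_l in Hub by lra.
    unfold Tn. lra. }
  destruct (Rle_dec Tn ((c - 1) * v)) as [Hle|Hgt]; [exact Hle|].
  exfalso. apply Rnot_le_lt in Hgt.
  set (d := Tn - (c - 1) * v).
  set (a := Rabs (c - 1) + 1).
  assert (Ha : 0 < a) by (unfold a; pose proof (Rabs_pos (c-1)); lra).
  set (e := d / (2 * a)).
  assert (He : 0 < e) by (unfold e, d; apply Rdiv_lt_0_compat; lra).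
  assert (Hce : (c - 1) * e <= d / 2).
  { assert ((c-1) * e <= Rabs (c-1) * e) by (apply Rmult_le_compat_r; [lra| apply Rle_abs]).
    assert (a * e = d / 2) by (unfold e; field; lra).
    unfold a in *. lra. }
  specialize (HD (v + e) ltac:(lra)).
  assert (Hd : d = Tn - (c - 1) * v) by reflexivity.
  assert (c * (v + e) = (c - 1) * v + (c - 1) * e + v + e) by ring.
  lra.
Qed.
Definition State (lambda : R) (S : strategy) (e : nat) (b : bool) (v w : R) : Prop :=
  lambda <= v /\ lambda <= w /\
  (forall i, (1 <= i <= e)%nat -> sr S i = b -> sx S i <= v) /\
  (forall i, (1 <= i <= e)%nat -> sr S i = negb b -> sx S i <= w) /\
  exists M, (e < M)%nat /\ sr S M = negb b /\ w < sx S M /\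
     (forall i, (e < i <= M)%nat -> sr S i = b -> sx S i <= v).

Lemma trans (lambda : R) (S : strategy) e b v w :
  valid_strategy S -> State lambda S e b v w ->
  exists e', (e < e')%nat /\ State lambda S e' (negb b) (sx S e') v.
Proof.
  intros [Hpos Hinf] [Hv [Hw [Hb [Hnb [M [HeM [HrM [HxM HbM]]]]]]]].
  destruct (Hinf b v) as [i [Hi1 [Hib Hiv]]].
  destruct (least_ex (fun N => (e < N)%nat /\ sr S N = b /\ v < sx S N)) as [N [[HeN [HNb HNv]] HNmin]].
  { exists i. split; [|split; auto].
    destruct (le_lt_dec i e) as [Hle|Hlt]; [|exact Hlt].
    specialize (Hb i ltac:(lia) Hib). lra. }
  assert (HMN : (M < N)%nat).
  { destruct (le_lt_dec N M) as [Hle|Hlt]; [|exact Hlt].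
    specialize (HbM N ltac:(lia) HNb). lra. }
  destruct (argmax_ex (fun i => sr S i = negb b) (sx S) N (Datatypes.S e) M ltac:(lia) HrM) as [j [Hj [Hjr Hjmax]]].
  exists j. split; [lia|].
  assert (HxMj : sx S M <= sx S j) by (apply Hjmax; [lia|exact HrM]).
  unfold State. rewrite Bool.negb_involutive.
  split; [lra|]. split; [exact Hv|]. split.
  - intros i' Hi' Hr'. destruct (le_lt_dec i' e) as [Hle|Hlt].
    + specialize (Hnb i' ltac:(lia) Hr'). lra.
    + apply Hjmax; [lia|exact Hr'].
  - split.
    + intros i' Hi' Hr'. destruct (le_lt_dec i' e) as [Hle|Hlt].
      * apply Hb; [lia|exact Hr'].
      * apply Rnot_lt_le. intro Hlt'. apply (HNmin i' ltac:(lia)). split; [lia|split; auto].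
    + exists N. split; [lia|]. split; [exact HNb|]. split; [exact HNv|].
      intros i' Hi' Hr'. destruct (Nat.eq_dec i' N) as [->|Hne].
      * rewrite HNb in Hr'. destruct b; discriminate.
      * apply Hjmax; [lia|exact Hr'].
Qed.

Lemma init_state lambda S : valid_strategy S -> exists b, State lambda S 0 b lambda lambda.
Proof.
  intros [Hpos Hinf].
  destruct (Hinf true lambda) as [i [Hi1 [_ Hil]]].
  destruct (least_ex (fun m => (1 <= m)%nat /\ lambda < sx S m)) as [M [[HM1 HMl] HMmin]].
  { exists i. auto. }
  exists (negb (sr S M)). split; [lra|]. split; [lra|]. split; [intros; lia|]. split; [intros; lia|].
  exists M. split; [lia|]. split; [rewrite Bool.negb_involutive; reflexivity|]. split; [exact HMl|].
  intros i' Hi' Hr'. destruct (Nat.eq_dec i' M) as [->|Hne].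
  - revert Hr'. case (sr S M); intro H; discriminate H.
  - apply Rnot_lt_le. intro H. apply (HMmin i' ltac:(lia)). split; [lia|exact H].
Qed.

Lemma key (s k : R) : 1 <= s -> k < (1 + s)^2 / s ->
  exists d, 0 < d /\ forall rho, 1 < rho -> rho <= 1 + / s -> k * (rho - 1) + d * rho <= rho ^ 2.
Proof.
  intros Hs Hk.
  set (eps := (1 + s)^2 / s - k).
  assert (Heps : 0 < eps) by (unfold eps; lra).
  exists (Rmin (1/8) (eps / (4 * s))).
  split. { apply Rmin_glb_lt; [lra|]. apply Rdiv_lt_0_compat; lra. }
  intros rho H1 H2.
  set (h := rho - 1).
  assert (Hh0 : 0 < h) by (unfold h; lra).
  assert (Hsh : s * h <= 1).
  { unfold h. assert (s * (rho - 1) <= s * / s) by (apply Rmult_le_compat_l; lra).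
    rewrite Rinv_r in H by lra. lra. }
  assert (Hrho : rho = 1 + h) by (unfold h; ring).
  assert (Hpoly : (1 + s)^2 / s * h + (1 - s*h)^2 <= rho ^ 2).
  { assert (Hmul: s * ((1 + s)^2 / s * h + (1 - s*h)^2) <= s * rho^2).
    { replace (s * ((1 + s)^2 / s * h + (1 - s*h)^2)) with ((1+s)^2*h + s*(1-s*h)^2) by (field; lra).
      rewrite Hrho.
      assert (0 <= (1 - s*h) * h * (s*s - 1)).
      { apply Rmult_le_pos; [apply Rmult_le_pos; lra|nra]. }
      assert (s * (1+h)^2 - ((1+s)^2*h + s*(1-s*h)^2) = (1 - s*h) * h * (s*s - 1)) by ring.
      lra. }
    apply Rmult_le_reg_l with s; lra. }
  assert (Hinv : / s <= 1).
  { rewrite <- Rinv_1. apply Rinv_le_contravar; lra. }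
  assert (Hrho2 : rho <= 2) by lra.
  set (d := Rmin (1/8) (eps / (4 * s))).
  assert (Hd1 : d <= 1/8) by apply Rmin_l.
  assert (Hd2 : d <= eps / (4 * s)) by apply Rmin_r.
  assert (Hd0 : 0 < d) by (apply Rmin_glb_lt; [lra|]; apply Rdiv_lt_0_compat; lra).
  assert (Hkk : k = (1 + s)^2 / s - eps) by (unfold eps; ring).
  assert (Hgoal : d * rho <= (1 - s*h)^2 + eps * h).
  { assert (d * rho <= 2 * d) by nra.
    destruct (Rle_dec (s*h) (1/2)) as [Hc|Hc].
    - assert ((1 - s*h)^2 >= 1/4) by nra.
      assert (0 <= eps * h) by nra. lra.
    - assert (Hd4 : d * (4 * s) <= eps).
      { apply Rmult_le_compat_r with (r := 4 * s) in Hd2; [|lra].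
        unfold Rdiv in Hd2. rewrite Rmult_assoc, Rinv_l in Hd2 by lra. lra. }
      assert (2 * d * (4 * s) < eps * h * (4 * s)) by nra.
      assert (2 * d < eps * h) by (apply Rmult_lt_reg_r with (4 * s); lra).
      assert (0 <= (1 - s*h)^2) by nra. lra. }
  rewrite Hkk. fold h.
  assert (((1 + s) ^ 2 / s - eps) * h = (1 + s)^2/s*h - eps * h) by ring.
  lra.
Qed.
Definition Vf (t K : R) (S : strategy) (e : nat) : R :=
  psum (fun i => 2 * sx S i + t) e / 2 + K * t / 4.

Definition Good lambda t S K B : Prop :=
  exists e b v w P, State lambda S e b v w /\ 0 < P /\
    v + t / 2 <= Vf t K S e - P /\ Vf t K S e <= B * P.

Lemma lower (lambda t : R) (S : strategy) (c : R) :
  0 < lambda -> 1 <= t / (2 * lambda) -> valid_strategy S -> is_lub (ratio_set lambda t S) c ->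
  1 + 2 * ((1 + t / (2 * lambda))^2 / (t / (2 * lambda))) <= c.
Proof.
  intros Hl Hs1 HV Hlub.
  set (s := t / (2 * lambda)) in *.
  assert (ht : t = 2 * lambda * s) by (unfold s; field; lra).
  assert (Ht : 2 * lambda <= t) by nra.
  destruct (Rlt_or_le c (1 + 2 * ((1 + s)^2 / s))) as [Hlt|Hge]; [|exact Hge].
  exfalso.
  set (K := c - 1).
  assert (Hk : K / 2 < (1 + s)^2 / s) by (unfold K; lra).
  destruct (key s (K/2) Hs1 Hk) as [dl [Hdl Hkey]].
  assert (Hf : forall i, (1 <= i)%nat -> 0 <= 2 * sx S i + t).
  { intros i Hi. destruct HV as [Hpos _]. specialize (Hpos i Hi). lra. }
  pose proof (cons_bound lambda t S c Hl ltac:(lra) HV Hlub) as Hcons.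
  set (q1 := 1 + / s).
  destruct (init_state lambda S HV) as [b0 H0].
  destruct (trans lambda S 0 b0 lambda lambda HV H0) as [e1 [He1 H1]].
  assert (HT1 : psum (fun i => 2 * sx S i + t) e1 <= K * lambda).
  { apply (Hcons e1 (negb (negb b0)) lambda); [lra|].
    destruct H1 as [_ [_ [_ [H4 _]]]]. exact H4. }
  assert (Hst1 := psum_step _ Hf 0 e1 He1). simpl psum in Hst1 at 1.
  assert (Hx1 : lambda <= sx S e1) by (destruct H1 as [H _]; exact H).
  assert (HKpos : 0 < K) by nra.
  assert (Hgood1 : Good lambda t S K q1).
  { exists e1, (negb b0), (sx S e1), lambda, (K * t / 4).
    split; [exact H1|]. split; [nra|]. unfold Vf. split; [lra|].
    assert (q1 * (K * t / 4) = K * t / 4 + K * lambda / 2) by (unfold q1; rewrite ht; field; lra).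
    lra. }
  assert (Hstep : forall B, B <= q1 -> Good lambda t S K B -> Good lambda t S K (B - dl)).
  { intros B HB [e [b [v [w [P [HS [HP [HG1 HG2]]]]]]]].
    destruct (trans lambda S e b v w HV HS) as [e' [Hee' HS']].
    assert (Hv : lambda <= v) by (destruct HS as [H _]; exact H).
    assert (HTe' : psum (fun i => 2 * sx S i + t) e' <= K * v).
    { apply (Hcons e' (negb (negb b)) v Hv).
      destruct HS' as [_ [_ [_ [H4 _]]]]. exact H4. }
    assert (Hst := psum_step _ Hf e e' Hee').
    exists e', (negb b), (sx S e'), v, (Vf t K S e).
    split; [exact HS'|].
    assert (HX : 0 < Vf t K S e) by lra.
    split; [exact HX|].
    split; [unfold Vf in *; lra|].
    set (X := Vf t K S e) in *.
    assert (HB1 : 1 < B) by nra.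
    assert (Hkb := Hkey B HB1 HB).
    assert (HVe' : Vf t K S e' <= K / 2 * (X - P)).
    { unfold Vf. assert (K / 2 * (v + t / 2) <= K / 2 * (X - P)) by (apply Rmult_le_compat_l; lra).
      lra. }
    assert (Hm1 : B * (K / 2 * (X - P)) <= K / 2 * ((B - 1) * X)).
    { assert (K / 2 * (X - B * P) <= 0) by nra. nra. }
    assert (Hm2 : K / 2 * (B - 1) * X <= (B ^ 2 - dl * B) * X).
    { apply Rmult_le_compat_r; lra. }
    assert (Hm3 : B * (K / 2 * (X - P)) <= B * ((B - dl) * X)).
    { assert ((B ^ 2 - dl * B) * X = B * ((B - dl) * X)) by ring.
      assert (K / 2 * ((B - 1) * X) = K / 2 * (B - 1) * X) by ring. lra. }
    apply Rmult_le_reg_l in Hm3; [|lra]. lra. }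
  assert (Hall : forall n : nat, Good lambda t S K (q1 - INR n * dl)).
  { induction n as [|n IH].
    - simpl. replace (q1 - 0 * dl) with q1 by ring. exact Hgood1.
    - replace (q1 - INR (Datatypes.S n) * dl) with ((q1 - INR n * dl) - dl) by (rewrite S_INR; ring).
      apply Hstep; [|exact IH]. pose proof (pos_INR n). nra. }
  destruct (nat_big ((q1 - 1) / dl)) as [N HN].
  destruct (Hall N) as [e [b [v [w [P [HS [HP [HG1 HG2]]]]]]]].
  assert (Hv : lambda <= v) by (destruct HS as [H _]; exact H).
  assert (HNd : q1 - 1 < INR N * dl).
  { apply Rmult_lt_compat_r with (r := dl) in HN; [|lra].
    unfold Rdiv in HN. rewrite Rmult_assoc, Rinv_l in HN by lra. lra. }
  assert ((q1 - INR N * dl) * P <= P) by nra.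
  lra.
Qed.
Lemma bern (x : R) (n : nat) : 0 <= x -> 1 + INR n * x <= (1 + x) ^ n.
Proof.
  intro Hx. induction n as [|n IH].
  - simpl. lra.
  - rewrite S_INR. simpl. pose proof (pos_INR n). nra.
Qed.

Lemma xopt_lb (lambda t : R) (i : nat) : 0 < lambda -> 1 <= t / (2 * lambda) ->
  (1 + INR i) * lambda <= xopt lambda t i.
Proof.
  intros Hl Hs. unfold xopt. cbv zeta.
  set (s := t / (2 * lambda)) in *.
  pose proof (bern (/ s) i) as Hb.
  assert (0 < / s) by (apply Rinv_0_lt_compat; lra).
  specialize (Hb ltac:(lra)).
  apply Rmult_le_compat_r; [lra|].
  assert ((1 + s) * (1 + INR i * / s) - s = 1 + INR i + INR i * / s) by (field; lra).
  pose proof (pos_INR i).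
  assert (0 <= INR i * / s) by nra.
  nra.
Qed.

Lemma psum_xopt (lambda t : R) : 0 < lambda -> 1 <= t / (2 * lambda) ->
  forall n, psum (fun i => 2 * xopt lambda t i + t) (Datatypes.S n)
            = 2 * ((1 + t / (2 * lambda))^2 / (t / (2 * lambda))) * xopt lambda t n.
Proof.
  intros Hl Hs. unfold xopt. cbv zeta.
  set (s := t / (2 * lambda)) in *.
  assert (ht : t = 2 * lambda * s) by (unfold s; field; lra).
  induction n as [|n IH].
  - simpl. rewrite ht. field. lra.
  - rewrite psumS, IH.
    replace ((1 + / s) ^ Datatypes.S (Datatypes.S n)) with ((1 + / s) ^ n * (1 + / s) * (1 + / s)) by (simpl; ring).
    replace ((1 + / s) ^ Datatypes.S n) with ((1 + / s) ^ n * (1 + / s)) by (simpl; ring).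
    rewrite ht. field. lra.
Qed.

Lemma rays_parity (r : nat -> bool) : periodic_rays r ->
  forall k, r (1 + 2 * k)%nat = r 1%nat /\ r (2 + 2 * k)%nat = r 2%nat.
Proof.
  intros [_ Hp] k. induction k as [|k [IH1 IH2]].
  - split; reflexivity.
  - replace (1 + 2 * Datatypes.S k)%nat with ((1 + 2 * k) + 2)%nat by lia.
    replace (2 + 2 * Datatypes.S k)%nat with ((2 + 2 * k) + 2)%nat by lia.
    rewrite !Hp by lia. auto.
Qed.
Theorem theorem4 (lambda t : R) (r : nat -> bool) :
  0 < lambda -> 0 <= t -> 1 <= t / (2 * lambda) ->
  periodic_rays r ->
  let s := t / (2 * lambda) in
  let S0 := mkStrategy (xopt lambda t) r in
  valid_strategy S0 /\
  comp_ratio lambda t S0 ((2 * xopt lambda t 1 + t + lambda) / lambda) /\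
  (2 * xopt lambda t 1 + t + lambda) / lambda = 2 * (s + 2) * (s + / 2) / s /\
  (forall (S : strategy) (c : R),
      valid_strategy S -> comp_ratio lambda t S c ->
      (2 * xopt lambda t 1 + t + lambda) / lambda <= c).
Proof.
  intros Hl Ht Hs Hper s S0.
  pose proof Hper as [H12 Hp].
  set (Kst := 2 * ((1 + t / (2 * lambda))^2 / (t / (2 * lambda)))).
  assert (Hx0 : xopt lambda t 0 = lambda) by (unfold xopt; simpl; ring).
  assert (Hid := psum_xopt lambda t Hl Hs).
  assert (H1 : 2 * xopt lambda t 1 + t = Kst * lambda).
  { specialize (Hid 0%nat). simpl in Hid. rewrite Hx0 in Hid. unfold Kst. lra. }
  assert (HKst : 0 < Kst).
  { unfold Kst. assert (0 < t / (2 * lambda)) by lra.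
    apply Rmult_lt_0_compat; [lra|]. apply Rdiv_lt_0_compat; [|lra].
    nra. }
  assert (Hc : (2 * xopt lambda t 1 + t + lambda) / lambda = 1 + Kst).
  { rewrite H1. field. lra. }
  rewrite Hc.
  assert (Hxl := fun i => xopt_lb lambda t i Hl Hs).
  split; [|split; [|split]].
  -
    split.
    + intros i Hi. simpl. specialize (Hxl i). pose proof (pos_INR i). nra.
    + intros b M. simpl.
      destruct (nat_big (M / lambda)) as [N HN].
      assert (HMN : M < INR N * lambda).
      { apply Rmult_lt_compat_r with (r := lambda) in HN; [|lra].
        unfold Rdiv in HN. rewrite Rmult_assoc, Rinv_l in HN by lra. lra. }
      assert (Hb : b = r 1%nat \/ b = r 2%nat).
      { destruct b, (r 1%nat), (r 2%nat); auto; congruence. }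
      destruct (rays_parity r Hper N) as [P1 P2].
      destruct Hb as [ -> | -> ].
      * exists (1 + 2 * N)%nat. split; [lia|]. split; [exact P1|].
        specialize (Hxl (1 + 2 * N)%nat).
        assert (INR N <= INR (1 + 2 * N)) by (apply le_INR; lia). nra.
      * exists (2 + 2 * N)%nat. split; [lia|]. split; [exact P2|].
        specialize (Hxl (2 + 2 * N)%nat).
        assert (INR N <= INR (2 + 2 * N)) by (apply le_INR; lia). nra.
  -
    split.
    + intros rho [b [D [j [HD [[Hj1 [Hjb [HjD Hmin]]] Hrho]]]]].
      subst rho. unfold total_cost. simpl sx.
      assert (HD0 : 0 < D) by lra.
      apply Rmult_le_reg_r with D; [lra|].
      unfold Rdiv. rewrite Rmult_assoc, Rinv_l, Rmult_1_r by lra.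
      destruct j as [|[|[|n]]]; [lia| | |].
      * simpl. nra.
      * simpl. rewrite Rplus_0_l. rewrite H1. nra.
      * replace (Datatypes.S (Datatypes.S (Datatypes.S n)) - 1)%nat with (Datatypes.S (Datatypes.S n)) by lia.
        rewrite Hid.
        assert (Hrn : r (Datatypes.S n) = b).
        { rewrite <- Hjb. simpl in Hjb.
          replace (Datatypes.S (Datatypes.S (Datatypes.S n))) with (Datatypes.S n + 2)%nat by lia.
          symmetry. apply Hp. lia. }
        assert (Hlt : xopt lambda t (Datatypes.S n) < D).
        { apply Rnot_le_lt. intro Hle. apply (Hmin (Datatypes.S n)); [lia|lia|]. simpl. auto. }
        fold Kst. nra.
    + intros ub Hub. apply Hub.
      exists (r 2%nat), lambda, 2%nat. split; [lra|]. split.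
      * unfold found_at. simpl. split; [lia|]. split; [reflexivity|]. split.
        -- specialize (Hxl 2%nat). simpl in Hxl. lra.
        -- intros i Hi1 Hi2 [Hri _]. assert (i = 1%nat) by lia. subst i.
           congruence.
      * unfold total_cost. simpl. rewrite Rplus_0_l, H1. field. lra.
  - unfold Kst, s. assert (t <> 0) by (intro H0; rewrite H0 in Hs; unfold Rdiv in Hs; rewrite Rmult_0_l in Hs; lra). field. lra.
  - intros S c HV Hlub. pose proof (lower lambda t S c Hl Hs HV Hlub). unfold Kst. lra.
Qed.
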